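(* Let $S$ be a stochastic operator and let $(V_1,\varphi_1)$ and $(V_2,\varphi_2)$ be two pairs, each consisting of a measurable weight $V_i:\Omega\to[1,\infty)$ and an admissible rate function $\varphi_i$, such that $\varphi_2(V_2)\ge V_1$ on $\Omega$. Assume that for each $i\in\{1,2\}$, $S$ is a stochastic operator on $\mathcal M_{V_i}$ and: (1) there exist $K_i>0$, $0<\varsigma_i<1$ with $\|S\mu\|_{V_i}+\varsigma_i\|\mu\|_{\varphi_i(V_i)}\le\|\mu\|_{V_i}+K_i\|\mu\|$ for all $\mu\in\mathcal M_{V_i}$; (2) for some integer $N_i\ge1$ there exist $0<\gamma_{H,i}<1$ and $A_i>K_i/\varsigma_i$ such that for every $\nu\in\mathcal N_{\varphi_i(V_i)}$ with $\|\nu\|_{\varphi_i(V_i)}\le A_i\|\nu\|$ one has $\|S^{N_i}\nu\|\le\gamma_{H,i}\|\nu\|$. Then $S$ has at most one equilibrium in $\mathcal P_{\varphi_2(V_2)}$.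
   Context: Let $(\Omega,\mathcal E)$ be a measurable space. $\mathcal M$ denotes the space of finite signed measures on $\Omega$, $\mathcal P\subset\mathcal M$ the set of probability measures, and $\mathcal N=\{\nu\in\mathcal M:\nu(\Omega)=0\}$. For $\mu\in\mathcal M$ with Hahn–Jordan decomposition $\mu=\mu_+-\mu_-$, $|\mu|=\mu_++\mu_-$ and $\|\mu\|=\int_\Omega d|\mu|$ is the total variation norm. For a measurable $W:\Omega\to[1,\infty)$, $\|\mu\|_W=\int_\Omega W\,d|\mu|$, $\mathcal M_W=\{\mu\in\mathcal M:\|\mu\|_W<\infty\}$, $\mathcal P_W=\mathcal P\cap\mathcal M_W$, $\mathcal N_W=\mathcal N\cap\mathcal M_W$. A stochastic operator is a linear map $S:\mathcal M\to\mathcal M$ with $S(\mathcal P)\subseteq\mathcal P$; it is a stochastic operator on $\mathcal M_W$ if moreover $S(\mathcal M_W)\subseteq\mathcal M_W$ and the restriction is bounded for $\|\cdot\|_W$. An admissible rate function is a concave function $\varphi:[1,\infty)\to[1,\infty)$ with $\varphi(1)=1$ and $\varphi(v)/v\to0$ as $v\to\infty$; $\varphi(V)$ denotes the composition $\varphi\circ V$. An equilibrium of $S$ is a $\mu\in\mathcal P$ with $S\mu=\mu$. *)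

(* Defs.v *)
From HB Require Import structures.
From mathcomp Require Import all_boot all_order all_algebra.
From mathcomp Require Import all_classical all_reals all_analysis.
Set Implicit Arguments. Unset Strict Implicit. Unset Printing Implicit Defensive.
Import Order.TTheory GRing.Theory Num.Theory.
Import numFieldNormedType.Exports.
Local Open Scope classical_set_scope.
Local Open Scope ring_scope.

Section Defs.
Context {R : realType} {d : measure_display} {T : measurableType d}.

Notation M := ({charge set T -> \bar R}).

Definition ceq (mu nu : M) := forall A, measurable A -> mu A = nu A.

(* a Hahn decomposition, chosen once and for all (the variation |mu| does not
   depend on the choice, cf. Hahn_decomposition_uniq). *)
Lemma hahn_ex (nu : M) : exists PN : set T * set T, hahn_decomposition nu PN.1 PN.2.
Proof. by have [P [N h]] := Hahn_decomposition nu; exists (P, N). Qed.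

Definition hahn_PN (nu : M) := cid (hahn_ex nu).

Definition cvar (nu : M) := charge_variation (proj2_sig (hahn_PN nu)).

Definition wnorm (W : T -> R) (nu : M) : \bar R := (\int[cvar nu]_x (W x)%:E)%E.

Definition tvnorm (nu : M) : \bar R := wnorm (fun _ => 1) nu.

Definition in_MW (W : T -> R) (nu : M) := (wnorm W nu < +oo)%E.

Definition is_prob (mu : M) :=
  (forall A, measurable A -> (0 <= mu A)%E) /\ mu setT = 1%E.

Definition linear_op (S : M -> M) :=
  forall (a b : R) (mu nu : M),
    ceq (S (cadd (cscale a mu) (cscale b nu))) (cadd (cscale a (S mu)) (cscale b (S nu))).

Definition stochastic_operator (S : M -> M) :=
  linear_op S /\ forall mu, is_prob mu -> is_prob (S mu).

Definition stochastic_operator_on (W : T -> R) (S : M -> M) :=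
  stochastic_operator S /\
  (forall mu, in_MW W mu -> in_MW W (S mu)) /\
  exists C : R, forall mu, in_MW W mu -> (wnorm W (S mu) <= C%:E * wnorm W mu)%E.

Definition weight (W : T -> R) := measurable_fun setT W /\ forall x, 1 <= W x.

End Defs.

(* admissible rate function phi : [1,oo) -> [1,oo) (values of phi outside
   [1,oo) are irrelevant) *)
Definition admissible_rate {R : realType} (phi : R -> R) :=
  [/\ (forall x y t : R, 1 <= x -> 1 <= y -> 0 <= t <= 1 ->
         t * phi x + (1 - t) * phi y <= phi (t * x + (1 - t) * y)),
      (forall v : R, 1 <= v -> 1 <= phi v),
      phi 1 = 1 &
      (phi v / v) @[v --> +oo] --> (0 : R)].

Definition drift_and_contraction {R : realType} {d : measure_display}
    {T : measurableType d} (S : {charge set T -> \bar R} -> {charge set T -> \bar R})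
    (V : T -> R) (phi : R -> R) :=
  exists K vs : R, [/\ 0 < K, 0 < vs < 1,
    (forall mu, in_MW V mu ->
       (wnorm V (S mu) + vs%:E * wnorm (phi \o V) mu <= wnorm V mu + K%:E * tvnorm mu)%E) &
    exists N : nat, (1 <= N)%N /\ exists gH A : R,
      [/\ 0 < gH < 1, K / vs < A &
        forall nu : {charge set T -> \bar R},
          nu setT = 0%E -> in_MW (phi \o V) nu ->
          (wnorm (phi \o V) nu <= A%:E * tvnorm nu)%E ->
          (tvnorm (iter N S nu) <= gH%:E * tvnorm nu)%E]].

(* Main.v *)
Require Import Defs.
From HB Require Import structures.
From mathcomp Require Import all_boot all_order all_algebra.
From mathcomp Require Import all_classical all_reals all_analysis.
From mathcomp Require Import lra measurable_realfun.
Import Order.TTheory GRing.Theory Num.Theory.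
Import numFieldNormedType.Exports.
Local Open Scope classical_set_scope.
Local Open Scope ring_scope.
Local Open Scope ereal_scope.

Section H.
Context {R : realType} {d : measure_display} {T : measurableType d}.
Notation M := ({charge set T -> \bar R}).

Lemma cvarE (X : M) A : measurable A ->
  cvar X A = X (A `&` (sval (hahn_PN X)).1) - X (A `&` (sval (hahn_PN X)).2).
Proof.
move=> mA; rewrite /cvar /charge_variation /=.
rewrite jordan_posE jordan_negE cjordan_posE cjordan_negE /crestr0 mem_set //.
Qed.

Lemma hahn_ceq (X Y : M) P N : ceq X Y -> hahn_decomposition X P N -> hahn_decomposition Y P N.
Proof.
move=> XY [[mP hP] [mN hN] PN1 PN2]; split => //; split => // A mA AP; rewrite -XY //;
 [exact: hP|exact: hN].
Qed.

Lemma cvar_ceq (X Y : M) A : ceq X Y -> measurable A -> cvar X A = cvar Y A.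
Proof.
move=> XY mA; rewrite !cvarE //.
case: (hahn_PN X) => [[P1 N1] /= h1]; case: (hahn_PN Y) => [[P2 N2] /= h2].
have [mP1 mN1] : measurable P1 /\ measurable N1 by case: h1 => [[? _] [? _] _ _].
have h1' := @hahn_ceq X Y _ _ XY h1.
have [e1 e2] := Hahn_decomposition_uniq h1' h2 mA.
by rewrite !XY ?e1 ?e2 //; apply: measurableI.
Qed.

Lemma wnorm_ceq W (X Y : M) : ceq X Y -> wnorm W X = wnorm W Y.
Proof.
move=> XY; rewrite /wnorm; apply: (eq_measure_integral (cvar Y)) => A mA _.
exact: cvar_ceq.
Qed.

Lemma S_ceq0 (S : M -> M) (mu : M) : stochastic_operator S -> is_prob mu ->
  forall Z : M, (forall A, measurable A -> Z A = 0) -> forall A, measurable A -> S Z A = 0.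
Proof.
move=> [lin pr] [mu0 mu1] Z Z0 A mA.
set x := fine (S mu A); set y := fine (S Z A).
have key s : (0 <= x + s * y)%R.
  have hp : is_prob (cadd (cscale 1 mu) (cscale s Z)).
    split => [B mB|]; rewrite /= /cadd /= /cscale /=.
      by rewrite Z0 // mule0 adde0 ?mul1e; exact: mu0.
    by rewrite Z0 // mule0 adde0 ?mul1e.
  have [hp0 _] := pr _ hp.
  have := hp0 A mA; rewrite (lin 1%R s mu Z A mA) /= /cadd /= /cscale /=.
  rewrite -(fineK (fin_num_measure (S mu) A mA)) -(fineK (fin_num_measure (S Z) A mA)).
  by rewrite -!EFinM -EFinD lee_fin mul1r.
have y0 : y = 0%R.
  apply/eqP; apply/negP => /negP yn0.
  have := key (- (x + 1) / y)%R.
  rewrite mulrAC -mulrA divff // mulr1; lra.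
by rewrite -(fineK (fin_num_measure (S Z) A mA)) -/y y0.
Qed.
Arguments S_ceq0 {S mu}.


Lemma S_resp (S : M -> M) (mu : M) : stochastic_operator S -> is_prob mu ->
  forall X Y : M, ceq X Y -> ceq (S X) (S Y).
Proof.
move=> hS hmu X Y XY A mA.
have h0 : forall B, measurable B -> cadd (cscale 1 X) (cscale (-1) Y) B = 0.
  move=> B mB; rewrite /cadd /= /cscale /= XY //.
  rewrite -(fineK (fin_num_measure Y B mB)) -!EFinM -EFinD; congr EFin; lra.
have := S_ceq0 hS hmu _ h0 _ mA; rewrite (hS.1 1%R (-1)%R X Y A mA) /= /cadd /= /cscale /=.
rewrite -(fineK (fin_num_measure (S X) A mA)) -(fineK (fin_num_measure (S Y) A mA)).
rewrite -!EFinM -EFinD => -[] h; congr EFin; lra.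
Qed.
Arguments S_resp {S mu}.

Lemma S_iter (S : M -> M) (mu nu : M) : stochastic_operator S -> is_prob mu ->
  ceq (S nu) nu -> forall n, ceq (iter n S nu) nu.
Proof.
move=> hS hmu h; elim=> [|n IH] A mA //=.
by rewrite (S_resp hS hmu _ _ IH _ mA); exact: h.
Qed.

Lemma my_le_int (mu : {measure set T -> \bar R}) (f g : T -> \bar R) :
  (forall x, 0 <= f x) -> (forall x, f x <= g x) ->
  \int[mu]_x f x <= \int[mu]_x g x.
Proof.
move=> f0 fg; rewrite !ge0_integralE //; last by move=> x _; exact: le_trans (f0 x) (fg x).
apply: ereal_sup_le => _ [h hf <-]; exists h => //= x.
move: (hf x); rewrite !patch_setT => hx; exact: le_trans hx (fg x).
Qed.

Lemma tvnormE (X : M) : tvnorm X = cvar X setT.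
Proof. by rewrite /tvnorm /wnorm integral_cst // mul1e. Qed.

Lemma tvnorm0 (X : M) : tvnorm X = 0 -> forall A, measurable A -> X A = 0.
Proof.
rewrite tvnormE => h A mA.
have := abse_charge_variation (proj2_sig (hahn_PN X)) mA.
have : cvar X A <= cvar X setT by apply: le_measure; rewrite ?inE.
rewrite h => h1 h2.
have : `|X A| <= 0 by exact: le_trans h2 h1.
move=> h3; apply/eqP; by rewrite -abse_eq0 eq_le h3 abse_ge0.
Qed.


Lemma cvar_sub_le (mu1 mu2 : M) : is_prob mu1 -> is_prob mu2 -> forall A, measurable A ->
  cvar (cadd (cscale 1 mu1) (cscale (-1) mu2)) A <= cvar mu1 A + cvar mu2 A.
Proof.
move=> [p10 _] [p20 _] A mA.
set nu : M := cadd (cscale 1 mu1) (cscale (-1) mu2).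
rewrite cvarE //.
case: (hahn_PN nu) => [[P N] /= hPN].
have [[mP _] [mN _] PNT PN0] := hPN.
have mAP : measurable (A `&` P) by exact: measurableI.
have mAN : measurable (A `&` N) by exact: measurableI.
have e1 := charge_partition mu1 mA mP mN PNT PN0.
have e2 := charge_partition mu2 mA mP mN PNT PN0.
have l1 : mu1 A <= cvar mu1 A := le_trans (lee_abs _) (abse_charge_variation _ mA).
have l2 : mu2 A <= cvar mu2 A := le_trans (lee_abs _) (abse_charge_variation _ mA).
apply: le_trans (leeD l1 l2).
rewrite /nu /cadd /= /cscale /= e1 e2.
have := p10 _ mAP; have := p10 _ mAN; have := p20 _ mAP; have := p20 _ mAN.
rewrite -(fineK (fin_num_measure mu1 _ mAP)) -(fineK (fin_num_measure mu1 _ mAN)).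
rewrite -(fineK (fin_num_measure mu2 _ mAP)) -(fineK (fin_num_measure mu2 _ mAN)).
have key (a b c e : R) : (0 <= e)%R -> (0 <= b)%R -> (0 <= c)%R -> (0 <= a)%R ->
    ((1%R)%:E * a%:E + (-1)%:E * b%:E - ((1%R)%:E * c%:E + (-1)%:E * e%:E)
     <= a%:E + c%:E + (b%:E + e%:E)).
  by move=> *; rewrite -!EFinM -!EFinD lee_fin; lra.
by rewrite !lee_fin; exact: key.
Qed.


Lemma wnorm_sub_le W (mu1 mu2 : M) : weight W -> is_prob mu1 -> is_prob mu2 ->
  wnorm W (cadd (cscale 1 mu1) (cscale (-1) mu2)) <= wnorm W mu1 + wnorm W mu2.
Proof.
move=> [mW W1] h1 h2; rewrite /wnorm.
have mWE := proj2 (measurable_EFinP setT W) mW.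
have W0 : forall x, 0 <= (W x)%:E.
  by move=> x; rewrite lee_fin; apply: le_trans (W1 x).
rewrite -ge0_integral_measure_add //.
apply: (ge0_le_measure_integral (m1:=cvar _) (m2:= measure_add (cvar mu1) (cvar mu2))) => //.
move=> A mA; have e := measure_addE (cvar mu1) (cvar mu2) A.
apply: (le_trans (@cvar_sub_le mu1 mu2 h1 h2 A mA)); apply: (@le_trans _ _ (measure_add (cvar mu1) (cvar mu2) A)); first by rewrite e.
exact: lexx.
Qed.
End H.

Local Close Scope ereal_scope.

Theorem corollary4p5 (R : realType) (d : measure_display) (T : measurableType d)
    (S : {charge set T -> \bar R} -> {charge set T -> \bar R})
    (V1 V2 : T -> R) (phi1 phi2 : R -> R) :
  stochastic_operator S ->
  weight V1 -> weight V2 ->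
  admissible_rate phi1 -> admissible_rate phi2 ->
  (forall x, V1 x <= phi2 (V2 x)) ->
  stochastic_operator_on V1 S -> stochastic_operator_on V2 S ->
  drift_and_contraction S V1 phi1 -> drift_and_contraction S V2 phi2 ->
  forall mu1 mu2 : {charge set T -> \bar R},
    is_prob mu1 -> in_MW (phi2 \o V2) mu1 -> ceq (S mu1) mu1 ->
    is_prob mu2 -> in_MW (phi2 \o V2) mu2 -> ceq (S mu2) mu2 ->
    ceq mu1 mu2.
Proof.
move=> hS hV1 _ [_ phi1ge _ _] _ hV12 _ _
  [K [vs [K0 /andP[vs0 vs1] drift [N [N1 [gH [A [/andP[gH0 gH1] KA contr]]]]]]]] _
  mu1 mu2 p1 f1 fix1 p2 f2 fix2.
have [mV1 V1ge] := hV1.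
set nu : {charge set T -> \bar R} := cadd (cscale 1 mu1) (cscale (-1) mu2).
have Snu : ceq (S nu) nu.
  move=> B mB; rewrite (hS.1 1%R (-1)%R mu1 mu2 B mB) /= /cadd /= /cscale /=.
  by rewrite fix1 // fix2.
have iterN := @S_iter _ _ _ S mu1 nu hS p1 Snu N.
have V1phi2 (mu : {charge set T -> \bar R}) :
    in_MW (phi2 \o V2) mu -> (wnorm V1 mu < +oo)%E.
  rewrite /in_MW => hmu; apply: le_lt_trans _ hmu; apply: my_le_int => x.
    by rewrite lee_fin; apply: le_trans (V1ge x).
  by rewrite lee_fin; exact: hV12.
have nuV1 : in_MW V1 nu.
  rewrite /in_MW; apply: le_lt_trans (@wnorm_sub_le _ _ _ V1 mu1 mu2 hV1 p1 p2) _.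
  by apply: lte_add_pinfty; apply: V1phi2.
have t0 : (0 <= tvnorm nu)%E by rewrite /tvnorm /wnorm integral_ge0.
have tfin : tvnorm nu \is a fin_num by rewrite tvnormE fin_num_measure.
have v0 : (0 <= wnorm V1 nu)%E.
  by rewrite /wnorm integral_ge0 // => x _; rewrite lee_fin; apply: le_trans (V1ge x).
have vfin : wnorm V1 nu \is a fin_num by rewrite ge0_fin_numE.
have W0 : (0 <= wnorm (phi1 \o V1) nu)%E.
  rewrite /wnorm integral_ge0 // => x _; rewrite lee_fin /=.
  by apply: le_trans (phi1ge _ (V1ge x)).
have hd := drift nu nuV1.
rewrite (@wnorm_ceq _ _ _ V1 _ _ Snu) leeD2lE // in hd.
have t0' : 0 <= fine (tvnorm nu) by apply: fine_ge0.
have [w Ww] : exists w, wnorm (phi1 \o V1) nu = w%:E.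
  move: hd W0; rewrite -(fineK tfin).
  case: (wnorm (phi1 \o V1) nu) => [w _ _|/=|//]; first by exists w.
  by rewrite mulry gtr0_sg // mul1e leye_eq.
have hW : (wnorm (phi1 \o V1) nu <= A%:E * tvnorm nu)%E.
  move: hd; rewrite Ww -(fineK tfin) -!EFinM !lee_fin => hd.
  have hw : w <= K / vs * fine (tvnorm nu).
    by rewrite mulrAC ler_pdivlMr // mulrC.
  apply: le_trans hw _; apply: ler_wpM2r => //; exact: ltW.
have nu0 : nu setT = 0%E.
  have -> : nu setT = ((1%R)%:E * mu1 setT + (-1)%:E * mu2 setT)%E by [].
  rewrite p1.2 p2.2.
  by rewrite -!EFinM -EFinD mul1r mulN1r subrr.
have inW : in_MW (phi1 \o V1) nu by rewrite /in_MW Ww ltey.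
have hc := contr nu nu0 inW hW.
have e : tvnorm (iter N S nu) = tvnorm nu := @wnorm_ceq _ _ _ (fun _ => 1%R) _ _ iterN.
rewrite e -(fineK tfin) -EFinM lee_fin in hc.
have tz : fine (tvnorm nu) = 0 by nra.
have tz0 : tvnorm nu = 0%E by rewrite -(fineK tfin) tz.
move=> B mB; have := @tvnorm0 _ _ _ nu tz0 B mB.
have -> : nu B = ((1%R)%:E * mu1 B + (-1)%:E * mu2 B)%E by [].
rewrite -(fineK (fin_num_measure mu1 B mB)) -(fineK (fin_num_measure mu2 B mB)).
rewrite -!EFinM -EFinD => -[] h; congr EFin; lra.
Qed.
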